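(* The map $\varphi:\mathbb{C}S_\infty\to\mathbb{C}(BC*S_\infty)$ is injective.
   Context: $BC$ is the bicyclic monoid $\langle p,q : pq=e\rangle$ with involution $p^*=q$. $S_\infty$ is the free monoid on $\{t_n,t_n^*: n\in\mathbb{N}\}$ with involution $t_n\mapsto t_n^*$. $BC*S_\infty$ is the free product of monoids, with the involution $(s_1t_1\cdots s_nt_n)^*=t_n^*s_n^*\cdots t_1^*s_1^*$. For a monoid $S$ with involution, $\mathbb{C}S$ is the semigroup algebra with basis $\{\delta_s:s\in S\}$, $\delta_s\delta_t=\delta_{st}$, $\delta_s^*=\delta_{s^*}$. Fix a C*-norm $\|\cdot\|$ on $\mathbb{C}(BC*S_\infty)$ (i.e. a norm whose completion is a C*-algebra containing $\mathbb{C}(BC*S_\infty)$ as a $*$-subalgebra). Let $\gamma_n=(n\|\delta_{t_n}\|)^{-1}$ and $a_n=\delta_p+\gamma_n\delta_{t_n}$ for $n\in\mathbb{N}$, and let $\varphi:\mathbb{C}S_\infty\to\mathbb{C}(BC*S_\infty)$ be the unique unital $*$-homomorphism with $\varphi(\delta_{t_n})=a_n$ for all $n\in\mathbb{N}$. *)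

(* Defs.v *)
From mathcomp Require Import all_boot all_algebra.
From mathcomp Require Import reals.
From mathcomp.real_closed Require Import complex.
From mathcomp Require Import finmap monalg.

Set Implicit Arguments.
Unset Strict Implicit.
Unset Printing Implicit Defensive.

Import GRing.Theory Num.Theory.
Local Open Scope ring_scope.
Local Open Scope complex_scope.

(* The free monoid S_oo on {t_n, t_n^* : n in N}, N = {1,2,3,...}.     *)
(* A letter (i, false) stands for t_(i+1), (i, true) for t_(i+1)^*.   *)
Definition letterS := (nat * bool)%type.
Definition Sinf := seq letterS.
Definition Sinf_one : Sinf := [::].
Definition Sinf_mul (u v : Sinf) : Sinf := u ++ v.
Definition Sinf_star (u : Sinf) : Sinf :=
  rev (map (fun x : letterS => (x.1, ~~ x.2)) u).
Definition Sinf_t (i : nat) : Sinf := [:: (i, false)].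

(* The free product BC * S_oo.  Since S_oo is free, BC * S_oo is the   *)
(* monoid generated by p, q, t_n, t_n^* subject only to p q = e.  Its  *)
(* elements are represented by their normal forms: words in these     *)
(* letters containing no factor "p q".                                 *)
(* inl false = p, inl true = q, inr (i, b) as in letterS.              *)
Definition letter := (bool + nat * bool)%type.
Definition letter_star (x : letter) : letter :=
  match x with
  | inl b => inl (~~ b)
  | inr (i, b) => inr (i, ~~ b)
  end.

Definition push (x : letter) (w : seq letter) : seq letter :=
  match x, w with
  | inl false, inl true :: w' => w'
  | _, _ => x :: w
  end.
Definition reduce (w : seq letter) : seq letter := foldr push [::] w.

Fixpoint reducedb (w : seq letter) : bool :=
  match w with
  | [::] => true
  | x :: w' =>
      ~~ ((x == inl false) && (head (inl false) w' == inl true)) && reducedb w'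
  end.

Definition FP := {w : seq letter | reducedb w}.

Definition FP_one : FP := exist _ [::] erefl.
Definition FP_mul (u v : FP) : FP := insubd FP_one (reduce (val u ++ val v)).
Definition FP_star (u : FP) : FP := insubd FP_one (rev (map letter_star (val u))).
Definition FP_p : FP := insubd FP_one [:: inl false].
Definition FP_q : FP := insubd FP_one [:: inl true].
Definition FP_t (i : nat) : FP := insubd FP_one [:: inr (i, false)].

Definition CA (R : realType) (S : choiceType) := {malg R[i][S]}.

Definition delta (R : realType) (S : choiceType) (s : S) : CA R S := << s >>.

Definition amul (R : realType) (S : choiceType) (m : S -> S -> S)
    (f g : CA R S) : CA R S :=
  \sum_(u <- msupp f) \sum_(v <- msupp g) << f@_u * g@_v *g m u v >>.

Definition astar (R : realType) (S : choiceType) (st : S -> S)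
    (f : CA R S) : CA R S :=
  \sum_(u <- msupp f) << (f@_u)^* *g st u >>.

Definition is_unital_star_hom (R : realType) (S T : choiceType)
    (mS : S -> S -> S) (sS : S -> S) (oneS : S)
    (mT : T -> T -> T) (sT : T -> T) (oneT : T)
    (phi : CA R S -> CA R T) : Prop :=
  (forall (c : R[i]) f g, phi (c *: f + g) = c *: phi f + phi g) /\
  (forall f g, phi (amul mS f g) = amul mT (phi f) (phi g)) /\
  phi (delta R oneS) = delta R oneT /\
  (forall f, phi (astar sS f) = astar sT (phi f)).

(* C*-norm on CT: a norm that is submultiplicative and satisfies the
   C*-identity (equivalently, its completion is a C*-algebra containing
   CT as a *-subalgebra). *)
Definition is_Cstar_norm (R : realType) (T : choiceType)
    (mT : T -> T -> T) (sT : T -> T) (nrm : CA R T -> R) : Prop :=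
  (forall x, 0 <= nrm x) /\
  (forall x, nrm x = 0 -> x = 0) /\
  (forall x y, nrm (x + y) <= nrm x + nrm y) /\
  (forall (c : R[i]) x, (nrm (c *: x))%:C = `|c| * (nrm x)%:C) /\
  (forall x y, nrm (amul mT x y) <= nrm x * nrm y) /\
  (forall x, nrm (amul mT (astar sT x) x) = nrm x ^+ 2).

Definition gamma (R : realType) (nrm : CA R FP -> R) (i : nat) : R :=
  ((i.+1)%:R * nrm (delta R (FP_t i)))^-1.

Definition a_gen (R : realType) (nrm : CA R FP -> R) (i : nat) : CA R FP :=
  delta R FP_p + (gamma nrm i)%:C *: delta R (FP_t i).

(* Main.v *)
Require Import Defs.
From mathcomp Require Import all_boot all_algebra.
From mathcomp Require Import reals.
From mathcomp.real_closed Require Import complex.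
From mathcomp Require Import finmap monalg.
From Stdlib Require Import Classical.
From mathcomp Require Import zify.
Import GRing.Theory Num.Theory.
Local Open Scope ring_scope.
Local Open Scope complex_scope.

Definition isinr (x : letter) : bool := if x is inr _ then true else false.

Lemma push_reduced x w : reducedb w -> reducedb (push x w).
Proof.
case: x => [[]|[i b]] //=; case: w => [|y w] //=.
- by case: y => [[]|[j c]] //= /andP[].
Qed.

Lemma reduce_reduced w : reducedb (reduce w).
Proof. by elim: w => //= x w IH; apply: push_reduced. Qed.

Lemma size_reduce w : (size (reduce w) <= size w)%N.
Proof.
elim: w => //= x w IH.
have H : forall v, (size (push x v) <= (size v).+1)%N.
  case: x => [[]|[i b]] //= [|y v] //=; case: y => [[]|[j c]] //=.
  by apply: leqW; apply: leqW.
by apply: (leq_trans (H _)); rewrite ltnS.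
Qed.

Lemma filter_reduce w : filter isinr (reduce w) = filter isinr w.
Proof.
elim: w => //= x w IH.
have H : forall v, filter isinr (push x v) = filter isinr (x :: v).
  by case: x => [[]|[i b]] //= [|y v] //=; case: y => [[]|[j c]].
by rewrite H /= IH.
Qed.

Lemma reduced_map_inr (s : seq letterS) : reducedb (map inr s).
Proof. by elim: s => //= x s ->. Qed.

Definition iota (w : Sinf) : FP := insubd FP_one (map inr w).

Lemma val_iota w : val (iota w) = map inr w.
Proof. by rewrite /iota insubdK //; apply: reduced_map_inr. Qed.

Lemma val_FP_mul a b : val (FP_mul a b) = reduce (val a ++ val b).
Proof. by rewrite /FP_mul insubdK //; apply: reduce_reduced. Qed.

Lemma subseq_size_eq (T : eqType) (s1 s2 : seq T) :
  subseq s1 s2 -> (size s2 <= size s1)%N -> s1 = s2.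
Proof.
move=> H Hs; have := eq_leqif (size_subseq_leqif H).
have -> : size s1 = size s2 by apply/eqP; rewrite eqn_leq Hs size_subseq.
by rewrite eqxx => /esym/eqP.
Qed.

Lemma filter_size_eq (T : Type) (a : pred T) (s : seq T) :
  (size s <= size (filter a s))%N -> filter a s = s.
Proof.
move=> H; apply/all_filterP; rewrite all_count -size_filter eqn_leq H.
by rewrite size_filter count_size.
Qed.

Lemma filter_map_inr (s : seq letterS) : filter isinr (map inr s) = map inr s.
Proof. by elim: s => //= x s ->. Qed.

Lemma reduce_map_inr (s : seq letterS) : reduce (map inr s) = map inr s.
Proof. by elim: s => //= x s ->. Qed.

Section Alg.
Variable R : realType.
Variable S : choiceType.

Lemma amul_coef (m : S -> S -> S) (f g : CA R S) z :
  (amul m f g)@_z = \sum_(u <- msupp f) \sum_(v <- msupp g) (f@_u * g@_v) *+ (m u v == z).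
Proof.
rewrite /amul (big_morph (mcoeff z) (mcoeffD z) (mcoeff0 z)).
apply: eq_bigr => u _; rewrite (big_morph (mcoeff z) (mcoeffD z) (mcoeff0 z)).
by apply: eq_bigr => v _; rewrite mcoeffU.
Qed.

Lemma astar_coef (st : S -> S) (f : CA R S) z :
  (astar st f)@_z = \sum_(u <- msupp f) (f@_u)^* *+ (st u == z).
Proof.
rewrite /astar (big_morph (mcoeff z) (mcoeffD z) (mcoeff0 z)).
by apply: eq_bigr => u _; rewrite mcoeffU.
Qed.

Lemma amul_supp (m : S -> S -> S) (f g : CA R S) z :
  z \in msupp (amul m f g) ->
  exists u v, [/\ u \in msupp f, v \in msupp g & z = m u v].
Proof.
rewrite -mcoeff_neq0 amul_coef => H; apply: NNPP => H'; move/negP: H; apply.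
apply/eqP; rewrite big1_seq // => u /= Hu; rewrite big1_seq // => v /= Hv.
case: eqP => // E; exfalso; apply: H'; by exists u, v.
Qed.

Lemma astar_supp (st : S -> S) (f : CA R S) z :
  z \in msupp (astar st f) -> exists2 u, u \in msupp f & z = st u.
Proof.
rewrite -mcoeff_neq0 astar_coef => H; apply: NNPP => H'; move/negP: H; apply.
apply/eqP; rewrite big1_seq // => u /= Hu.
case: eqP => // E; exfalso; apply: H'; by exists u.
Qed.

Lemma sum_pick (f : CA R S) (F : S -> R[i]) x :
  (forall y, y \notin msupp f -> F y = 0) ->
  \sum_(u <- msupp f) F u *+ (u == x) = F x.
Proof.
move=> H0; have [Hx|Hx] := boolP (x \in msupp f).
  rewrite (bigD1_seq x) //= eqxx big1 ?addr0 // => u /negbTE.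
  by rewrite eq_sym => ->.
rewrite H0 // big1_seq // => u /= Hu; case: eqP => // E.
by rewrite -E Hu in Hx.
Qed.

Lemma msupp_delta (s : S) : msupp (delta R s) = [fset s]%fset.
Proof. by rewrite /delta msuppU oner_eq0. Qed.

Lemma amul_delta (m : S -> S -> S) s t :
  amul m (delta R s) (delta R t) = delta R (m s t).
Proof. by rewrite /amul !msupp_delta !big_seq_fset1 !mcoeffUU mulr1. Qed.

Lemma astar_delta (st : S -> S) s : astar st (delta R s) = delta R (st s).
Proof. by rewrite /astar msupp_delta big_seq_fset1 mcoeffUU conjC1. Qed.

End Alg.

Section Inv.
Variable R : realType.

Definition Inv (w : Sinf) (F : CA R FP) :=
  F@_(iota w) != 0 /\
  forall u, u \in msupp F ->
    (size (val u) <= size w)%N /\ subseq (filter isinr (val u)) (map inr w).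

Lemma FP_mul_iota w1 w2 : FP_mul (iota w1) (iota w2) = iota (w1 ++ w2).
Proof. by apply: val_inj; rewrite val_FP_mul !val_iota -map_cat reduce_map_inr. Qed.

Lemma key w1 w2 F G u v : Inv w1 F -> Inv w2 G -> u \in msupp F -> v \in msupp G ->
  (FP_mul u v == iota (w1 ++ w2)) = (u == iota w1) && (v == iota w2).
Proof.
move=> [_ HF] [_ HG] Hu Hv.
apply/eqP/andP => [E|[/eqP -> /eqP ->]]; last exact: FP_mul_iota.
have [su fu] := HF u Hu; have [sv fv] := HG v Hv.
have E2 := congr1 (fun x => filter isinr (val x)) E; move: E2 => /=.
rewrite val_FP_mul val_iota filter_reduce filter_cat filter_map_inr map_cat => E2.
have s1 := size_subseq fu; have s2 := size_subseq fv.
have /(congr1 size) := E2; rewrite !size_cat !size_map in s1 s2 * => Es.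
have e1 : (size w1 <= size (filter isinr (val u)))%N by rewrite -(leq_add2r (size w2)) -Es leq_add2l.
have e2 : (size w2 <= size (filter isinr (val v)))%N by rewrite -(leq_add2l (size w1)) -Es leq_add2r.
have Eu : filter isinr (val u) = map inr w1 by apply: subseq_size_eq; [exact: fu | rewrite size_map].
have Ev : filter isinr (val v) = map inr w2 by apply: subseq_size_eq; [exact: fv | rewrite size_map].
have Fu : filter isinr (val u) = val u by apply: filter_size_eq; rewrite Eu size_map.
have Fv : filter isinr (val v) = val v by apply: filter_size_eq; rewrite Ev size_map.
split; apply/eqP; apply: val_inj; rewrite val_iota.
  by rewrite -Fu.
by rewrite -Fv.
Qed.

Lemma Inv_mul w1 w2 F G : Inv w1 F -> Inv w2 G -> Inv (w1 ++ w2) (amul FP_mul F G).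
Proof.
move=> IF IG; split.
  rewrite amul_coef.
  rewrite (eq_big_seq (fun u => F@_u *+ (u == iota w1) * G@_(iota w2))).
    rewrite -big_distrl /= sum_pick; last by move=> y /mcoeff_outdom ->.
    by rewrite mulf_neq0 //; [case: IF | case: IG].
  move=> u Hu; rewrite (eq_big_seq (fun v => (F@_u *+ (u == iota w1)) * (G@_v *+ (v == iota w2)))).
    by rewrite -mulr_sumr sum_pick // => y /mcoeff_outdom ->.
  move=> v Hv /=; rewrite (key _ _ _ _ _ _ IF IG Hu Hv).
  by case: (u == iota w1); case: (v == iota w2); rewrite ?mulr0n ?mul0r ?mulr0 ?mulr1n.
move=> z /amul_supp [u [v [Hu Hv ->]]].
have [su fu] := IF.2 u Hu; have [sv fv] := IG.2 v Hv.
rewrite val_FP_mul filter_reduce filter_cat map_cat cat_subseq // size_cat.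
split => //; apply: (leq_trans (size_reduce _)); by rewrite size_cat leq_add.
Qed.
End Inv.
Arguments Inv {R}.

Lemma val_FP_p : val FP_p = [:: inl false].
Proof. by rewrite /FP_p insubdK. Qed.
Lemma val_FP_t i : val (FP_t i) = [:: inr (i, false)].
Proof. by rewrite /FP_t insubdK. Qed.
Lemma val_FP_star_p : val (FP_star FP_p) = [:: inl true].
Proof. by rewrite /FP_star val_FP_p /= insubdK. Qed.
Lemma val_FP_star_t i : val (FP_star (FP_t i)) = [:: inr (i, true)].
Proof. by rewrite /FP_star val_FP_t /= insubdK. Qed.
Lemma iota_nil : iota [::] = FP_one.
Proof. by apply: val_inj; rewrite val_iota. Qed.

Section Base.
Variable R : realType.
Variable nrm : CA R FP -> R.
Hypothesis Hnrm : is_Cstar_norm FP_mul FP_star nrm.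

Lemma gamma_neq0 i : (gamma nrm i)%:C != 0.
Proof.
apply/eqP => /(congr1 (@complex.Re _)) /= /eqP; apply/negP.
rewrite /gamma invr_eq0 mulf_neq0 // ?pnatr_eq0 //.
apply/eqP => /(proj1 (proj2 Hnrm)) /eqP; rewrite /delta monalgU_eq0.
by rewrite oner_eq0.
Qed.

Lemma Inv_nil : Inv [::] (delta R FP_one).
Proof.
split; first by rewrite iota_nil /delta mcoeffUU oner_eq0.
by move=> u; rewrite msupp_delta inE => /eqP ->.
Qed.

Lemma a_gen_supp i u : u \in msupp (a_gen nrm i) -> u = FP_p \/ u = FP_t i.
Proof.
move=> /(fsubsetP (msuppD_le _ _)); rewrite inE => /orP[].
  by rewrite msupp_delta inE => /eqP; left.
by move=> /(fsubsetP (msuppZ_le _ _)); rewrite msupp_delta inE => /eqP; right.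
Qed.

Lemma a_gen_coef i : (a_gen nrm i)@_(FP_t i) = (gamma nrm i)%:C.
Proof.
rewrite /a_gen mcoeffD mcoeffZ /delta !mcoeffU eqxx.
have -> : (FP_p == FP_t i) = false.
  by apply/negbTE/eqP => /(congr1 val); rewrite val_FP_p val_FP_t.
by rewrite mulr0n add0r mulr1n mulr1.
Qed.

Lemma Inv_t i : Inv [:: (i, false)] (a_gen nrm i).
Proof.
split.
  have -> : iota [:: (i, false)] = FP_t i by [].
  by rewrite a_gen_coef gamma_neq0.
move=> u /a_gen_supp [] ->; first by rewrite val_FP_p.
by rewrite val_FP_t; split => //; exact: subseq_refl.
Qed.

Lemma Inv_ts i : Inv [:: (i, true)] (astar FP_star (a_gen nrm i)).
Proof.
split.
  rewrite astar_coef.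
  rewrite (eq_big_seq (fun u => ((a_gen nrm i)@_u)^* *+ (u == FP_t i))).
    rewrite sum_pick; last by move=> y /mcoeff_outdom ->; rewrite conjC0.
    by rewrite a_gen_coef conjC_eq0 gamma_neq0.
  move=> u /a_gen_supp [] -> /=.
    have -> : (FP_p == FP_t i) = false.
      by apply/negbTE/eqP => /(congr1 val); rewrite val_FP_p val_FP_t.
    have -> // : (FP_star FP_p == iota [:: (i, true)]) = false.
    by apply/negbTE/eqP => /(congr1 val); rewrite val_FP_star_p val_iota.
  rewrite eqxx; have -> // : (FP_star (FP_t i) == iota [:: (i, true)]) = true.
  by apply/eqP/val_inj; rewrite val_FP_star_t val_iota.
move=> z /astar_supp [u /a_gen_supp [] -> ->].
  by rewrite val_FP_star_p.
by rewrite val_FP_star_t; split => //; exact: subseq_refl.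
Qed.
End Base.

Lemma exists_max (s : seq Sinf) x0 : x0 \in s ->
  exists2 x, x \in s & forall y, y \in s -> (size y <= size x)%N.
Proof.
elim: s x0 => // a s IH x0; rewrite inE => _.
have [Hs|Hs] := boolP (has (fun x => x \in s) s).
  case/hasP: Hs => x1 /IH [x Hx Hm].
  case: (leqP (size a) (size x)) => Ha.
    exists x; first by rewrite inE Hx orbT.
    by move=> y; rewrite inE => /orP[/eqP ->|/Hm].
  exists a; first by rewrite inE eqxx.
  move=> y; rewrite inE => /orP[/eqP -> //|/Hm H]; exact: leq_trans H (ltnW Ha).
exists a; first by rewrite inE eqxx.
move=> y; rewrite inE => /orP[/eqP -> //|Hy]; exfalso; move/negP: Hs; apply.
by apply/hasP; exists y.
Qed.

Lemma malgU_scale (R : realType) (S : choiceType) (c : R[i]) (k : S) :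
  << c *g k >> = c *: delta R k.
Proof. by apply/malgP => z; rewrite mcoeffZ /delta !mcoeffU mulr_natr. Qed.

Theorem corollary3p3 (R : realType) (nrm : CA R FP -> R)
  (Hnrm : is_Cstar_norm FP_mul FP_star nrm)
  (phi : CA R Sinf -> CA R FP)
  (Hphi : is_unital_star_hom Sinf_mul Sinf_star Sinf_one
                             FP_mul FP_star FP_one phi)
  (Hgen : forall i : nat, phi (delta R (Sinf_t i)) = a_gen nrm i) :
  injective phi.
Proof.
case: Hphi => Hlin [Hmul [Hone Hstar]].
have phi0 : phi 0 = 0.
  have := Hlin 1 0 0; rewrite !scale1r !addr0 => H.
  by apply: (@addrI _ (phi 0)); rewrite addr0 -H.
have phiZ c f : phi (c *: f) = c *: phi f by rewrite -[c *: f]addr0 Hlin phi0 addr0.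
have phiD f g : phi (f + g) = phi f + phi g by have := Hlin 1 f g; rewrite !scale1r.
have Hdelta : forall w, Inv w (phi (delta R w)).
  elim => [|[j b] w IH]; first by rewrite Hone; exact: Inv_nil.
  have -> : delta R ((j, b) :: w) = amul Sinf_mul (delta R [:: (j, b)]) (delta R w).
    by rewrite amul_delta.
  rewrite Hmul; apply: (@Inv_mul R [:: (j, b)] w _ _ _ IH).
  case: b.
    have -> : delta R [:: (j, true)] = astar Sinf_star (delta R (Sinf_t j)).
      by rewrite astar_delta.
    rewrite Hstar Hgen; exact: Inv_ts.
  rewrite (Hgen j); exact: Inv_t.
move=> f g E.
have Eh : phi (f - g) = 0.
  by rewrite -scaleN1r addrC Hlin E scaleN1r addNr.
apply/eqP; rewrite -subr_eq0; apply/eqP; move: Eh; set h := f - g => Eh.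
apply/malgP => x0; rewrite mcoeff0; apply: NNPP => Hk0.
have Hx0 : x0 \in msupp h by rewrite -mcoeff_neq0; apply/eqP.
have [w0 Hw0 Hmax] := @exists_max _ _ Hx0.
have := congr1 (mcoeff (iota w0)) Eh; rewrite mcoeff0 => /eqP; apply/negP.
rewrite {1}(monalgE h) (big_morph phi phiD phi0).
rewrite (big_morph (mcoeff (iota w0)) (mcoeffD _) (mcoeff0 _)).
rewrite (eq_big_seq (fun w => (h@_w * (phi (delta R w))@_(iota w0)) *+ (w == w0))).
  rewrite sum_pick; last by move=> y /mcoeff_outdom ->; rewrite mul0r.
  apply: mulf_neq0; [by rewrite mcoeff_neq0 | by case: (Hdelta w0)].
move=> w Hw /=; rewrite malgU_scale phiZ mcoeffZ.
have [->|Hne] := eqP; first by rewrite mulr1n.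
rewrite mulr0n; apply/eqP; rewrite mulf_eq0; apply/orP; right.
rewrite mcoeff_eq0; apply/negP => Hin.
have [s1 s2] := (Hdelta w).2 _ Hin.
move: s1 s2; rewrite val_iota size_map filter_map_inr => s1 s2.
have := @subseq_size_eq _ _ _ s2; rewrite !size_map => /(_ (Hmax _ Hw)) /inj_map.
by move=> /(_ inr_inj) /esym.
Qed.
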